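(* Let $S$ be a set and let $m:\mathcal{L}\to S$ and $M_1:S\times\Sigma\to\{1,-1,r\}$ be computable functions such that for all $\sigma\in\mathcal{L}$ and $s\in\Sigma$: $M_1(m(\sigma),s)=1$ if $\sigma$ determines $s$ with value $1$; $M_1(m(\sigma),s)=-1$ if $\sigma$ determines $s$ with value $-1$; and $M_1(m(\sigma),s)=r$ if $\sigma$ does not determine $s$. (That is, $\langle M,M_0,M_1,S\rangle$ with $M_0(\sigma,s)=(m(\sigma),s)$ and $M=M_1\circ M_0$ is a Memory-factoring Abstract Generating Automaton for $\mathcal{L}$.) Then $|S|\ge 24$.
   Context: Let $\Sigma=\{A,B,C,a,b,c,\alpha,\beta,\gamma\}$ be nine observables arranged in a $3\times 3$ square with rows $(A,B,C)$, $(a,b,c)$, $(\alpha,\beta,\gamma)$. The six \emph{contexts} are the three rows $\{A,B,C\},\{a,b,c\},\{\alpha,\beta,\gamma\}$ and the three columns $\{A,a,\alpha\},\{B,b,\beta\},\{C,c,\gamma\}$. Each context has a sign: $-1$ for $\{C,c,\gamma\}$ and $+1$ for the other five. Two distinct observables are \emph{compatible} if they lie in a common context, and \emph{incompatible} otherwise. Let $\tilde\Sigma=\{X,\tilde X: X\in\Sigma\}$ (18 letters); the letter $X$ means ''observable $X$ measured with value $1$'' and $\tilde X$ means ''$X$ measured with value $-1$''. For a word $w=t_1\cdots t_m\in\tilde\Sigma^*$ define inductively partial assignments $v_0,\dots,v_m:\Sigma\rightharpoonup\{1,-1\}$ (an observable in $\mathrm{dom}(v_i)$ is \emph{determined} after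 step $i$, with value $v_i(X)$), and whether $w$ is consistent: $v_0$ is the empty assignment. Given $v_{i-1}$, let $t_i$ record observable $X$ with value $\varepsilon$. If $X\in\mathrm{dom}(v_{i-1})$ and $v_{i-1}(X)\ne\varepsilon$, then $w$ is \emph{inconsistent}. Otherwise let $u$ be the restriction of $v_{i-1}$ to observables that are equal to or compatible with $X$, extended by $u(X)=\varepsilon$; then $v_i$ is obtained from $u$ by repeatedly doing the following until nothing changes: whenever a context has exactly two of its observables in the domain, assign the third observable the value making the product of the three values equal to the sign of that context. The word $w$ is \emph{consistent} if no step is inconsistent; $\mathcal{L}$ is the set of consistent words (it contains the empty word). For $w\in\mathcal{L}$ of length $m$: $w$ \emph{determines} an observable $s$ with value $v$ if $v_m(s)=v$, and $w$ does not determine $s$ if $s\notin\mathrm{dom}(v_m)$. The symbol $r$ is a third output value meaning ''random/undetermined''. *)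

(* Defs.v *)
From HB Require Import structures.
From mathcomp Require Import all_boot.
Set Implicit Arguments. Unset Strict Implicit. Unset Printing Implicit Defensive.

(* The nine observables of the 3x3 square, rows (A,B,C),(a,b,c),(al,be,ga). *)
Inductive obs := oA | oB | oC | oa | ob | oc | oal | obe | oga.

Definition obs_idx (x : obs) : nat :=
  match x with oA => 0 | oB => 1 | oC => 2 | oa => 3 | ob => 4 | oc => 5
  | oal => 6 | obe => 7 | oga => 8 end.

Definition obs_eqb (x y : obs) : bool := obs_idx x == obs_idx y.
Lemma obs_eqP : Equality.axiom obs_eqb.
Proof. by move=> [] []; constructor. Qed.
HB.instance Definition _ := hasDecEq.Build obs obs_eqP.

(* Measurement values: true encodes +1, false encodes -1.
   The product of two values is then boolean equality. *)
Definition vmul (x y : bool) : bool := x == y.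

Record context := Ctx { c1 : obs; c2 : obs; c3 : obs; csign : bool }.

Definition contexts : seq context :=
  [:: Ctx oA oB oC true; Ctx oa ob oc true; Ctx oal obe oga true;
      Ctx oA oa oal true; Ctx oB ob obe true; Ctx oC oc oga false].

Definition in_ctx (x : obs) (k : context) : bool :=
  (x == c1 k) || (x == c2 k) || (x == c3 k).

Definition compatible (x y : obs) : bool :=
  (x != y) && has (fun k => in_ctx x k && in_ctx y k) contexts.

Definition assign := obs -> option bool.
Definition empty_assign : assign := fun _ => None.
Definition upd (v : assign) (x : obs) (e : bool) : assign :=
  fun y => if y == x then Some e else v y.

(* If context k has exactly two of its observables determined, the value
   forced on the third (so that the product equals the sign). *)
Definition ctx_force (v : assign) (k : context) : option (obs * bool) :=
  match v (c1 k), v (c2 k), v (c3 k) with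
  | Some x, Some y, None => Some (c3 k, vmul (vmul x y) (csign k))
  | Some x, None, Some z => Some (c2 k, vmul (vmul x z) (csign k))
  | None, Some y, Some z => Some (c1 k, vmul (vmul y z) (csign k))
  | _, _, _ => None
  end.

Fixpoint prop_step_in (ks : seq context) (v : assign) : assign :=
  match ks with
  | [::] => v
  | k :: ks' =>
      match ctx_force v k with
      | Some (x, e) => upd v x e
      | None => prop_step_in ks' v
      end
  end.

Definition prop_step (v : assign) : assign := prop_step_in contexts v.

(* Repeating until nothing changes: each effective step enlarges the
   domain, so 9 iterations always reach the fixed point. *)
Definition closure (v : assign) : assign := iter 9 prop_step v.

Definition letter := (obs * bool)%type.

Definition step (v : assign) (t : letter) : option assign :=
  let: (x, e) := t in
  match v x with
  | Some e' => if e' == e then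
                 Some (closure (fun y => if y == x then Some e
                                         else if compatible x y then v y else None))
               else None
  | None => Some (closure (fun y => if y == x then Some e
                                    else if compatible x y then v y else None))
  end.

Definition run (w : seq letter) : option assign :=
  foldl (fun ov t => if ov is Some v then step v t else None)
        (Some empty_assign) w.

Definition consistent (w : seq letter) : bool := run w.

Definition L := {w : seq letter | consistent w}.

Definition final (w : seq letter) : assign := odflt empty_assign (run w).

Inductive outv := Out1 | OutM1 | OutR.

Definition out_of (o : option bool) : outv :=
  match o with Some true => Out1 | Some false => OutM1 | None => OutR end.

(* Main.v *)
Require Import Defs.
From mathcomp Require Import all_boot.

Definition allobs := [:: oA; oB; oC; oa; ob; oc; oal; obe; oga].
Definition code (o : outv) : nat := match o with Out1 => 0 | OutM1 => 1 | OutR => 2 end.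
Definition prof (w : seq letter) : seq nat := map (fun s => code (out_of (final w s))) allobs.

Definition ws : seq (seq letter) :=
  flatten [seq [seq [:: (c1 k, e1); (c2 k, e2)] | e1 <- [:: true; false], e2 <- [:: true; false]]
          | k <- contexts].

Lemma ws_size : size ws = 24. Proof. by vm_compute. Qed.
Lemma ws_cons : all consistent ws. Proof. by vm_compute. Qed.
Lemma ws_uniq : uniq (map prof ws). Proof. by vm_compute. Qed.

Lemma wi_cons (i : 'I_24) : consistent (nth [::] ws i).
Proof. apply: (allP ws_cons); apply: mem_nth; by rewrite ws_size. Qed.

Theorem mainTheorem7 (S : Type) (m : L -> S) (M1 : S -> obs -> outv)
  (HM : forall (w : L) (s : obs), M1 (m w) s = out_of (final (sval w) s)) :
  exists f : 'I_24 -> S, injective f.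
Proof.
exists (fun i : 'I_24 => m (exist _ (nth [::] ws i) (wi_cons i))).
move=> i j Hij.
have Hp : prof (nth [::] ws i) = prof (nth [::] ws j).
  rewrite /prof; apply: eq_map => s.
  have := HM (exist _ (nth [::] ws i) (wi_cons i)) s.
  have := HM (exist _ (nth [::] ws j) (wi_cons j)) s.
  rewrite Hij /= => -> -> //.
apply: val_inj => /=.
have Hi : i < size (map prof ws) by rewrite size_map ws_size.
have Hj : j < size (map prof ws) by rewrite size_map ws_size.
apply/eqP; rewrite -(nth_uniq [::] Hi Hj ws_uniq).
by rewrite !(nth_map [::]) -?(size_map prof) // Hp.
Qed.
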